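(* Let $\alpha>0$, $\alpha\neq1$, and let $\rho,\sigma$ be density operators on a finite-dimensional Hilbert space with $\operatorname{supp}(\rho)\subseteq\operatorname{supp}(\sigma)$. Then $$S_{\alpha}(\rho\|\sigma)=\hat{D}_{1/\alpha}\big(\rho^{(\alpha)}\|\sigma^{(\alpha)}\big),$$ where $\rho^{(\alpha)}=\rho^{\alpha}/\operatorname{Tr}(\rho^{\alpha})$ and $\sigma^{(\alpha)}=\sigma^{\alpha}/\operatorname{Tr}(\sigma^{\alpha})$.
   Context: A density operator is a positive semidefinite operator of unit trace; $\operatorname{supp}$ denotes the span of eigenvectors with nonzero eigenvalues. The quantum relative $\alpha$-entropy is $S_{\alpha}(\rho\|\sigma)=\frac{\alpha}{1-\alpha}\log\operatorname{Tr}(\rho\sigma^{\alpha-1})-\frac{1}{1-\alpha}\log\operatorname{Tr}(\rho^{\alpha})+\log\operatorname{Tr}(\sigma^{\alpha})$ (negative powers of $\sigma$ taken on its support). The Petz–Rényi relative entropy of order $\beta>0$, $\beta\ne1$, is $\hat{D}_{\beta}(\rho\|\sigma)=\frac{1}{\beta-1}\log\operatorname{Tr}(\rho^{\beta}\sigma^{1-\beta})$. *)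

(* Defs.v *)
From HB Require Import structures.
From mathcomp Require Import all_boot all_order all_algebra.
From mathcomp Require Import complex.
From mathcomp Require Import reals exp.
Set Implicit Arguments. Unset Strict Implicit. Unset Printing Implicit Defensive.
Import Order.TTheory GRing.Theory Num.Theory.
Local Open Scope ring_scope.
Local Open Scope sesquilinear_scope.

Section QInfo.
Variable R : realType.
Local Notation C := R[i].

Definition psdmx n (A : 'M[C]_n) : Prop :=
  A \is hermsymmx /\ forall v : 'rV[C]_n, 0 <= (v *m A *m v ^t*) 0 0.

Definition density n (A : 'M[C]_n) : Prop := psdmx A /\ \tr A = 1.

Definition mxfun n (f : C -> C) (A : 'M[C]_n) : 'M[C]_n :=
  (spectralmx A) ^t* *m diag_mx (map_mx f (spectral_diag A)) *m spectralmx A.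

(* real power A^p of a PSD matrix; 0^p = 0 for p <> 0 (powers taken on the
   support), since powR 0 p = (p == 0)%:R *)
Definition rpowmx n (A : 'M[C]_n) (p : R) : 'M[C]_n :=
  mxfun (fun z : C => (((complex.Re z) `^ p)%:C)%C) A.

(* support: span of eigenvectors with nonzero eigenvalues
   (row-vector convention: v *m A = a *: v) *)
Definition supp n (A : 'M[C]_n) : 'M[C]_n :=
  (\sum_(i < n | spectral_diag A 0 i != 0) eigenspace A (spectral_diag A 0 i))%MS.

(* real part of the trace (the traces below are real numbers) *)
Definition trR n (A : 'M[C]_n) : R := complex.Re (\tr A).

Definition S_alpha n (a : R) (rho sigma : 'M[C]_n) : R :=
  a / (1 - a) * ln (trR (rho *m rpowmx sigma (a - 1)))
  - 1 / (1 - a) * ln (trR (rpowmx rho a))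
  + ln (trR (rpowmx sigma a)).

Definition petzD n (b : R) (rho sigma : 'M[C]_n) : R :=
  1 / (b - 1) * ln (trR (rpowmx rho b *m rpowmx sigma (1 - b))).

Definition escort n (a : R) (rho : 'M[C]_n) : 'M[C]_n :=
  (\tr (rpowmx rho a))^-1 *: rpowmx rho a.

End QInfo.

(* Main.v *)
Require Import Defs.
From HB Require Import structures.
From mathcomp Require Import all_boot all_order all_algebra.
From mathcomp Require Import complex.
From mathcomp Require Import reals exp.
Import Order.TTheory GRing.Theory Num.Theory.
Local Open Scope ring_scope.

From mathcomp Require Import ring.
Set Implicit Arguments. Unset Strict Implicit. Unset Printing Implicit Defensive.
Import Order.TTheory GRing.Theory Num.Theory.
Local Open Scope ring_scope.
Local Open Scope sesquilinear_scope.

Section H.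
Variable R : realType.
Local Notation C := R[i].

Lemma unitK n (P : 'M[C]_n) : P \is unitarymx -> P^t* *m P = 1%:M.
Proof. by move=> PU; rewrite -[P^t*]mul1mx mulmxKtV. Qed.

Lemma unitK' n (P : 'M[C]_n) : P \is unitarymx -> P *m P^t* = 1%:M.
Proof. by move/unitarymxP. Qed.

Lemma spec_decomp n (A : 'M[C]_n) : A \is normalmx ->
  A = (spectralmx A)^t* *m diag_mx (spectral_diag A) *m spectralmx A.
Proof.
move/orthomx_spectralP => {1}->; by rewrite invmx_unitary // spectral_unitarymx.
Qed.

Lemma diag_comm n (U : 'M[C]_n) (d e : 'rV[C]_n) (f : C -> C) :
  U *m diag_mx d = diag_mx e *m U ->
  U *m diag_mx (map_mx f d) = diag_mx (map_mx f e) *m U.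
Proof.
move=> /matrixP H; apply/matrixP => i j.
rewrite mul_mx_diag mul_diag_mx !mxE.
have := H i j; rewrite mul_mx_diag mul_diag_mx !mxE.
case: (eqVneq (U i j) 0) => [->|Uij]; first by move=> _; rewrite mulr0 mul0r.
move=> E; have -> : d 0 j = e 0 i.
  by apply: (mulfI Uij); rewrite E mulrC.
by rewrite mulrC.
Qed.

Lemma mxfun_eq n (f : C -> C) (P : 'M[C]_n) (d : 'rV[C]_n) (A : 'M[C]_n) :
  P \is unitarymx -> A = P^t* *m diag_mx d *m P ->
  mxfun f A = P^t* *m diag_mx (map_mx f d) *m P.
Proof.
move=> PU AE.
have An : A \is normalmx.
  apply/orthomx_spectral_subproof; exists (P, d) => //=.
  by rewrite invmx_unitary.
rewrite /mxfun.
set Q := spectralmx A; set e := spectral_diag A.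
have QU : Q \is unitarymx by exact: spectral_unitarymx.
have AQ := spec_decomp An; rewrite -/Q -/e in AQ.
pose U := P *m Q^t*.
have UE : U *m diag_mx e = diag_mx d *m U.
  have -> : diag_mx e = Q *m A *m Q^t*.
    by rewrite AQ !mulmxA (unitK' QU) mul1mx -!mulmxA (unitK' QU) mulmx1.
  have -> : diag_mx d = P *m A *m P^t*.
    by rewrite AE !mulmxA (unitK' PU) mul1mx -!mulmxA (unitK' PU) mulmx1.
  rewrite /U !mulmxA -[P *m Q^t* *m Q]mulmxA (unitK QU) mulmx1.
  by rewrite -[P *m A *m P^t* *m P]mulmxA (unitK PU) mulmx1.
have UF := diag_comm f UE.
have PtE : P^t* = Q^t* *m U^t*.
  by rewrite /U trmx_mul map_mxM trmxCK mulmxA (unitK QU) mul1mx.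
have PE : P = U *m Q by rewrite /U -mulmxA (unitK QU) mulmx1.
have UtU : U^t* *m U = 1%:M.
  by rewrite /U trmx_mul map_mxM trmxCK !mulmxA -[Q *m P^t* *m P]mulmxA (unitK PU) mulmx1 unitK'.
clearbody U; rewrite PtE [in RHS]PE !mulmxA -[Q^t* *m U^t* *m _ *m U]mulmxA -UF !mulmxA.
by rewrite -[Q^t* *m U^t* *m U]mulmxA UtU mulmx1.
Qed.

Lemma rowcol n (X Y : 'M[C]_n) i j : (row i X *m col j Y) 0 0 = (X *m Y) i j.
Proof. by rewrite !mxE; apply: eq_bigr => l _; rewrite !mxE. Qed.

Lemma psd_diag n (A Q : 'M[C]_n) k : psdmx A -> 0 <= (Q *m A *m Q^t*) k k.
Proof.
case=> _ /(_ (row k Q)).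
have -> : row k Q *m A *m (row k Q)^t* = row k (Q *m A) *m col k (Q^t*).
  by rewrite row_mul tr_row map_col.
by rewrite rowcol.
Qed.

Lemma ge0_real (z : C) : 0 <= z -> z = ((complex.Re z)%:C)%C.
Proof. by move=> /ger0_Im; case: z => a b /= ->. Qed.

Lemma psd_decomp n (A : 'M[C]_n) : psdmx A ->
  let P := spectralmx A in
  let x := fun i => complex.Re (spectral_diag A 0 i) in
  [/\ A = P^t* *m diag_mx (\row_i ((x i)%:C)%C) *m P, forall i, 0 <= x i
     & spectral_diag A = \row_i ((x i)%:C)%C].
Proof.
move=> Apsd P x.
have Ah : A \is normalmx by apply: hermitian_normalmx; case: Apsd.
have AE := spec_decomp Ah; rewrite -/P in AE.
have PU : P \is unitarymx by exact: spectral_unitarymx.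
have dge0 i : 0 <= spectral_diag A 0 i.
  have := psd_diag P i Apsd.
  have -> : P *m A *m P^t* = diag_mx (spectral_diag A).
    by rewrite {1}AE !mulmxA (unitK' PU) mul1mx -!mulmxA (unitK' PU) mulmx1.
  by rewrite mxE eqxx mulr1n.
have dE : spectral_diag A = \row_i ((x i)%:C)%C.
  by apply/rowP => i; rewrite mxE [LHS]ge0_real // ord1.
split => //; first by rewrite -dE.
move=> i; have := dge0 i; rewrite [spectral_diag A 0 i]ge0_real //.
by rewrite ler0c.
Qed.

Lemma diag_congr n (P : 'M[C]_n) (v w : 'rV[C]_n) : v = w ->
  P^t* *m diag_mx v *m P = P^t* *m diag_mx w *m P.
Proof. by move=> ->. Qed.

Lemma rpow_decomp n (P : 'M[C]_n) (x : 'I_n -> R) (A : 'M[C]_n) p :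
  P \is unitarymx -> A = P^t* *m diag_mx (\row_i ((x i)%:C)%C) *m P ->
  rpowmx A p = P^t* *m diag_mx (\row_i (((x i) `^ p)%:C)%C) *m P.
Proof.
move=> PU AE; rewrite /rpowmx (mxfun_eq _ PU AE); apply: diag_congr.
by apply/rowP => i; rewrite !mxE.
Qed.

Lemma scale_decomp n (P : 'M[C]_n) (v : 'rV[C]_n) c :
  c *: (P^t* *m diag_mx v *m P) = P^t* *m diag_mx (c *: v) *m P.
Proof.
rewrite scalemxAl scalemxAr; congr (_ *m _ *m _).
by apply/matrixP => i j; rewrite !mxE mulrnAr.
Qed.

Lemma tr_decomp n (P : 'M[C]_n) (v : 'rV[C]_n) : P \is unitarymx ->
  \tr (P^t* *m diag_mx v *m P) = \sum_i v 0 i.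
Proof.
move=> PU; rewrite mxtrace_mulC mulmxA (unitK' PU) mul1mx mxtrace_diag.
by [].
Qed.

Lemma tr_prod n (A Q : 'M[C]_n) (y : 'rV[C]_n) :
  \tr (A *m (Q^t* *m diag_mx y *m Q)) = \sum_k (Q *m A *m Q^t*) k k * y 0 k.
Proof.
rewrite !mulmxA mxtrace_mulC !mulmxA /mxtrace; apply: eq_bigr => k _.
by rewrite mul_mx_diag mxE.
Qed.

Lemma eigvec_diag m n (V : 'M[C]_(m, n)) (e : 'rV[C]_n) c (f : C -> C) :
  V *m diag_mx e = c *: V -> V *m diag_mx (map_mx f e) = f c *: V.
Proof.
move=> /matrixP H; apply/matrixP => r k; have := H r k.
rewrite !mul_mx_diag !mxE.
case: (eqVneq (V r k) 0) => [->|Vrk]; first by move=> _; rewrite mul0r mulr0.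
move=> E; have -> : e 0 k = c by apply: (mulfI Vrk); rewrite E mulrC.
by rewrite mulrC.
Qed.

Definition indf (z : C) : C := (z != 0)%:R.

Definition projS n (A : 'M[C]_n) : 'M[C]_n :=
  (spectralmx A)^t* *m diag_mx (map_mx indf (spectral_diag A)) *m spectralmx A.

Lemma supp_ker n (A : 'M[C]_n) : A \is normalmx ->
  (supp A <= kermx (1%:M - projS A))%MS.
Proof.
move=> An; set Q := spectralmx A; set e := spectral_diag A.
have QU : Q \is unitarymx by exact: spectral_unitarymx.
have AE := spec_decomp An; rewrite -/Q -/e in AE.
apply/sumsmx_subP => j ej; set W := eigenspace A _.
have /eigenspaceP WA : (W <= eigenspace A (e 0 j))%MS by exact: submx_refl.
have H1 : (W *m Q^t*) *m diag_mx e = e 0 j *: (W *m Q^t*).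
  rewrite scalemxAl -WA AE !mulmxA -[W *m Q^t* *m diag_mx e *m Q *m Q^t*]mulmxA.
  by rewrite (unitK' QU) mulmx1.
have H2 := eigvec_diag indf H1.
rewrite /indf ej scale1r in H2.
rewrite sub_kermx mulmxBr mulmx1 /projS -/Q -/e !mulmxA H2.
by rewrite -mulmxA (unitK QU) mulmx1 subrr.
Qed.

Lemma self_supp n (A : 'M[C]_n) : A \is normalmx -> (A <= supp A)%MS.
Proof.
move=> An; set P := spectralmx A; set d := spectral_diag A.
have PU : P \is unitarymx by exact: spectral_unitarymx.
have AE := spec_decomp An; rewrite -/P -/d in AE.
rewrite {1}AE -mulmxA; apply: submx_trans (submxMl _ _) _.
apply/row_subP => i.
have -> : row i (diag_mx d *m P) = d 0 i *: row i P.
  by apply/rowP => k; rewrite mul_diag_mx !mxE.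
case: (eqVneq (d 0 i) 0) => [->|di]; first by rewrite scale0r sub0mx.
apply: scalemx_sub; apply: (sumsmx_sup i) => //.
apply/eigenspaceP.
rewrite [in LHS]AE !mulmxA -row_mul (unitK' PU) -row_mul mul1mx -row_mul.
by apply/rowP => k; rewrite mul_diag_mx !mxE.
Qed.

Lemma pow_lem (c x a b : R) : 0 <= c -> 0 <= x ->
  (c * x `^ a) `^ b = c `^ b * x `^ (a * b).
Proof. by move=> c0 x0; rewrite powRM ?powR_ge0 // powRrM. Qed.

Lemma ReM (k : R) (z : C) : complex.Re ((k%:C)%C * z) = k * complex.Re z.
Proof. by case: z => u v /=; rewrite mul0r subr0. Qed.

Lemma escort_pow n (A P : 'M[C]_n) (x : 'I_n -> R) a b :
  P \is unitarymx -> A = P^t* *m diag_mx (\row_i ((x i)%:C)%C) *m P ->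
  (forall i, 0 <= x i) ->
  rpowmx (escort a A) b = P^t* *m diag_mx
     (\row_i (((\sum_j x j `^ a)^-1 `^ b * x i `^ (a * b))%:C)%C) *m P.
Proof.
move=> PU AE x0.
set t := \sum_j x j `^ a.
have t0 : 0 <= t by apply: sumr_ge0 => j _; exact: powR_ge0.
have EE : escort a A = P^t* *m diag_mx (\row_i ((t^-1 * x i `^ a)%:C)%C) *m P.
  rewrite /escort (rpow_decomp a PU AE) tr_decomp //.
  have -> : \sum_i (\row_i0 (((x i0) `^ a)%:C)%C : 'rV[C]_n) 0 i = (t%:C)%C.
    by rewrite rmorph_sum; apply: eq_bigr => i _; rewrite mxE.
  rewrite scale_decomp; apply: diag_congr.
  by apply/rowP => i; rewrite !mxE rmorphM fmorphV.
rewrite (rpow_decomp b PU EE); apply: diag_congr.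
by apply/rowP => i; rewrite !mxE pow_lem // invr_ge0.
Qed.

Lemma sum_pos n (x : 'I_n -> R) a : (forall i, 0 <= x i) ->
  \sum_i x i = 1 -> 0 < \sum_i x i `^ a.
Proof.
move=> x0 s1; rewrite lt_def sumr_ge0 ?andbT; last by move=> i _; exact: powR_ge0.
apply/eqP => S0.
have H := psumr_eq0P (fun i _ => powR_ge0 (x i) a) S0.
have : \sum_i x i = 0.
  by apply: big1 => i _; apply: (@powR_eq0_eq0 _ _ a); exact: H.
by rewrite s1 => /eqP; rewrite oner_eq0.
Qed.

Lemma tr_real n (P : 'M[C]_n) (x : 'I_n -> R) : P \is unitarymx ->
  complex.Re (\tr (P^t* *m diag_mx (\row_i ((x i)%:C)%C) *m P)) = \sum_i x i.
Proof.
move=> PU; rewrite tr_decomp // raddf_sum; apply: eq_bigr => i _; by rewrite mxE.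
Qed.

Lemma dens_sum n (A : 'M[C]_n) (P : 'M[C]_n) (x : 'I_n -> R) : P \is unitarymx ->
  A = P^t* *m diag_mx (\row_i ((x i)%:C)%C) *m P -> \tr A = 1 -> \sum_i x i = 1.
Proof. by move=> PU AE A1; rewrite -(tr_real _ PU) -AE A1. Qed.

Lemma T_pos n (rho sigma : 'M[C]_n) p : density rho -> density sigma ->
  (supp rho <= supp sigma)%MS -> 0 < trR (rho *m rpowmx sigma p).
Proof.
move=> [rp rt] [sp st] hsupp.
pose Q := spectralmx sigma.
pose y := fun i => complex.Re (spectral_diag sigma 0 i).
have [sE y0 eE] : [/\ sigma = Q^t* *m diag_mx (\row_i ((y i)%:C)%C) *m Q,
   forall i, 0 <= y i & spectral_diag sigma = \row_i ((y i)%:C)%C] := psd_decomp sp.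
have QU : Q \is unitarymx by exact: spectral_unitarymx.
have rn : rho \is normalmx by apply: hermitian_normalmx; case: rp.
have sn : sigma \is normalmx by apply: hermitian_normalmx; case: sp.
have Hk : (rho <= kermx (1%:M - projS sigma))%MS.
  exact: submx_trans (self_supp rn) (submx_trans hsupp (supp_ker sn)).
have rPi : rho *m projS sigma = rho.
  move: Hk; rewrite sub_kermx mulmxBr mulmx1 subr_eq0 => /eqP.
  by move=> <-.
pose M := Q *m rho *m Q^t*.
have Mge0 k : 0 <= M k k := psd_diag Q k rp.
have one : \sum_k M k k * indf ((y k)%:C)%C = 1.
  have : \tr (rho *m projS sigma) = 1 by rewrite rPi.
  rewrite /projS -/Q tr_prod -/M => <-; apply: eq_bigr => k _.
  by rewrite eE !mxE.
rewrite /trR (rpow_decomp p QU sE) tr_prod -/M.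
rewrite (eq_bigr (fun k => M k k * ((y k `^ p)%:C)%C)); last first.
  by move=> k _; rewrite [X in _ * X]mxE.
set TC := \sum_k _.
have Tge0 k : 0 <= M k k * ((y k `^ p)%:C)%C.
  by apply: mulr_ge0 => //; rewrite ler0c powR_ge0.
have TC0 : 0 <= TC.
  by apply: sumr_ge0 => k _; exact: Tge0.
have TCn : TC != 0.
  apply/eqP => T0.
  have H := psumr_eq0P (fun k _ => Tge0 k) T0.
  move: one; rewrite big1; first by move/eqP; rewrite eq_sym oner_eq0.
  move=> k _; rewrite /indf.
  case yk: (_ != 0); last by rewrite mulr0.
  rewrite mulr1.
  have : M k k * ((y k `^ p)%:C)%C = 0.
    exact: H.
  move/eqP; rewrite mulf_eq0 => /orP [/eqP //|/eqP].
  case => /powR_eq0_eq0 yk0; by move: yk; rewrite yk0 rmorph0 eqxx.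
have : 0 < TC by rewrite lt_def TCn TC0.
by rewrite ltcE => /andP [_ h]; exact: h.
Qed.

Lemma final_alg (a T tA tB : R) : 0 < a -> a != 1 -> 0 < T -> 0 < tA -> 0 < tB ->
 a / (1 - a) * ln T - 1 / (1 - a) * ln tA + ln tB =
 1 / (1 / a - 1) * ln (tA^-1 `^ (1/a) * tB^-1 `^ (1 - 1/a) * T).
Proof.
move=> a0 a1 T0 A0 B0.
have k1p : 0 < tA^-1 `^ (1/a) by apply: powR_gt0; rewrite invr_gt0.
have k2p : 0 < tB^-1 `^ (1 - 1/a) by apply: powR_gt0; rewrite invr_gt0.
rewrite lnM ?posrE ?mulr_gt0 // lnM ?posrE // !ln_powR lnV ?posrE // lnV ?posrE //.
have an0 : a != 0 by rewrite gt_eqF.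
have a10 : 1 - a != 0 by rewrite subr_eq0 eq_sym.
have a20 : 1 / a - 1 != 0.
  rewrite subr_eq0; apply: contra a1 => /eqP h.
  by move: h; rewrite div1r => /(congr1 GRing.inv); rewrite invrK invr1 => ->.
field.
by rewrite an0 mulN1r a10.
Qed.

Lemma main n (a : R) (rho sigma : 'M[C]_n) :
  0 < a -> a != 1 ->
  density rho -> density sigma ->
  (supp rho <= supp sigma)%MS ->
  S_alpha a rho sigma = petzD (1 / a) (escort a rho) (escort a sigma).
Proof.
move=> a0 a1 rd sd hsupp.
have Tp := T_pos (a - 1) rd sd hsupp.
case: rd => rp rt; case: sd => sp st.
pose P := spectralmx rho.
pose x := fun i => complex.Re (spectral_diag rho 0 i).
have [rE x0 _] : [/\ rho = P^t* *m diag_mx (\row_i ((x i)%:C)%C) *m P,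
   forall i, 0 <= x i & spectral_diag rho = \row_i ((x i)%:C)%C] := psd_decomp rp.
pose Q := spectralmx sigma.
pose y := fun i => complex.Re (spectral_diag sigma 0 i).
have [sE y0 _] : [/\ sigma = Q^t* *m diag_mx (\row_i ((y i)%:C)%C) *m Q,
   forall i, 0 <= y i & spectral_diag sigma = \row_i ((y i)%:C)%C] := psd_decomp sp.
have PU : P \is unitarymx by exact: spectral_unitarymx.
have QU : Q \is unitarymx by exact: spectral_unitarymx.
have an0 : a != 0 by rewrite gt_eqF.
have xs1 := dens_sum PU rE rt.
have ys1 := dens_sum QU sE st.
set tA := \sum_i x i `^ a.
set tB := \sum_i y i `^ a.
have trp : 0 < tA by apply: sum_pos.
have tsp : 0 < tB by apply: sum_pos.
have Er : trR (rpowmx rho a) = tA by rewrite /trR (rpow_decomp a PU rE) tr_real.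
have Es : trR (rpowmx sigma a) = tB by rewrite /trR (rpow_decomp a QU sE) tr_real.
pose k1 := tA^-1 `^ (1 / a).
pose k2 := tB^-1 `^ (1 - 1 / a).
have aa : a * (1 / a) = 1 by rewrite mul1r mulfV.
have ab : a * (1 - 1 / a) = a - 1 by rewrite mulrBr mulr1 mul1r mulfV.
have E1 : rpowmx (escort a rho) (1 / a) = (k1%:C)%C *: rho.
  rewrite (escort_pow a (1 / a) PU rE x0) -/tA [in RHS]rE scale_decomp.
  apply: diag_congr; apply/rowP => i.
  by rewrite !mxE rmorphM aa powRr1.
have E2 : rpowmx (escort a sigma) (1 - 1 / a) = (k2%:C)%C *: rpowmx sigma (a - 1).
  rewrite (escort_pow a (1 - 1 / a) QU sE y0) -/tB (rpow_decomp (a - 1) QU sE) scale_decomp.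
  apply: diag_congr; apply/rowP => i.
  by rewrite !mxE rmorphM ab.
rewrite /petzD.
have -> : trR (rpowmx (escort a rho) (1 / a) *m rpowmx (escort a sigma) (1 - 1 / a))
    = k1 * k2 * trR (rho *m rpowmx sigma (a - 1)).
  by rewrite E1 E2 -scalemxAl -scalemxAr /trR !mxtraceZ mulrA -rmorphM ReM.
rewrite /S_alpha.
have -> : trR (rpowmx rho a) = tA by exact: Er.
have -> : trR (rpowmx sigma a) = tB by exact: Es.
move: Tp; move: (trR _) => T Tp.
exact: final_alg.
Qed.

End H.

Theorem lemma9 (R : realType) (n : nat) (a : R) (rho sigma : 'M[R[i]]_n) :
  0 < a -> a != 1 ->
  density rho -> density sigma ->
  (supp rho <= supp sigma)%MS ->
  S_alpha a rho sigma = petzD (1 / a) (escort a rho) (escort a sigma).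
Proof. exact: main. Qed.
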